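(* Let $\alpha\ge 1$. (i) The vector $(1,2,\dots,2)$ of length $\alpha$ is realized by the path $P_{2\alpha-1}$ on $2\alpha-1$ vertices, and (up to isomorphism) by no other graph. (ii) No vector of the form $(1,2,\dots,2,1)$ (with at least one entry 2) is realizable. (iii) The vector $(2,\dots,2)$ of length $\alpha$ is 0-realized by the path $P_{2\alpha}$ on $2\alpha$ vertices, and (up to isomorphism) by no other graph. (iv) No vector of the form $(2,\dots,2,1)$ (with at least one entry 2) is 0-realizable.
   Context: All graphs are finite, nonempty, and reflexive (every vertex has a loop). $N[v]$ is the closed neighborhood of $v$ (including $v$). For distinct $v,w$, $w$ strictly corners $v$ if $N[v]\subsetneq N[w]$; $v$ is then a strict corner. A vertex dominates a set if adjacent to all its vertices. Corner ranking: set $G^{(1)}=G$, $k=1$. If $G^{(k)}$ is a clique, give all its vertices rank $k$ and stop. Else if $G^{(k)}$ has no strict corners, give all its vertices rank $\infty$ and stop. Else give every strict corner of $G^{(k)}$ rank $k$, delete them to get $G^{(k+1)}$ (induced subgraph), increase $k$ and repeat. The corner rank of $G$ is the largest rank of a vertex; $X_k$ is the set of rank-$k$ vertices. A graph is cop-win (in the game of cops and robbers) iff its corner rank is finite. If $G$ has finite corner rank $\alpha\ge 2$, it is of type 1 if some (equivalently every) vertex of rank $\alpha$ dominates $V(G^{(\alpha-1)})$, and of type 0 otherwise. A vector is a finite list of positive integers. The rank cardinality vector of a graph of corner rank $\alpha$ is $(x_\alpha,\dots,x_1)$ with $x_k=|X_k|$. A vector is realizable if it is the rank cardinality vector of some cop-win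 graph, and 0-realizable if it is the rank cardinality vector of some cop-win graph of type 0. *)

(* Defs.v *)
From mathcomp Require Import all_boot all_order.
Set Implicit Arguments. Unset Strict Implicit. Unset Printing Implicit Defensive.

Definition is_graph (T : finType) (e : rel T) : Prop :=
  [/\ 0 < #|T|, reflexive e & symmetric e].

Definition nbhd (T : finType) (e : rel T) (S : {set T}) (v : T) : {set T} :=
  [set w in S | e v w].

Definition strict_corner (T : finType) (e : rel T) (S : {set T}) (v : T) : bool :=
  (v \in S) && [exists w in S, (w != v) && (nbhd e S v \proper nbhd e S w)].

Definition corners (T : finType) (e : rel T) (S : {set T}) : {set T} :=
  [set v in S | strict_corner e S v].

Definition is_clique (T : finType) (e : rel T) (S : {set T}) : bool :=
  [forall u in S, forall v in S, e u v].

(* G^(k) (for k >= 1): the vertex set after k-1 rounds of deleting strict corners *)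
Definition Gk (T : finType) (e : rel T) (k : nat) : {set T} :=
  iter k.-1 (fun S => S :\: corners e S) setT.

Definition stops (T : finType) (e : rel T) (k : nat) : bool :=
  is_clique e (Gk e k) || (corners e (Gk e k) == set0).

Definition corner_rank_is (T : finType) (e : rel T) (a : nat) : Prop :=
  [/\ 0 < a, is_clique e (Gk e a) & forall k, 0 < k < a -> ~~ stops e k].

Definition cop_win (T : finType) (e : rel T) : Prop := exists a, corner_rank_is e a.

(* X_k, the set of vertices of rank k, when the corner rank is a *)
Definition Xk (T : finType) (e : rel T) (a k : nat) : {set T} :=
  if k < a then Gk e k :\: Gk e k.+1 else Gk e a.

(* rank cardinality vector (x_a, ..., x_1) *)
Definition rcv (T : finType) (e : rel T) (a : nat) : seq nat :=
  [seq #|Xk e a k| | k <- rev (iota 1 a)].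

Definition has_rcv (T : finType) (e : rel T) (v : seq nat) : Prop :=
  exists a, corner_rank_is e a /\ rcv e a = v.

Definition type1 (T : finType) (e : rel T) : Prop :=
  exists a, [/\ corner_rank_is e a, 2 <= a &
    exists2 v, v \in Xk e a a & forall u, u \in Gk e a.-1 -> e v u].

Definition type0 (T : finType) (e : rel T) : Prop := cop_win e /\ ~ type1 e.

Definition realizable (v : seq nat) : Prop :=
  exists (T : finType) (e : rel T), [/\ is_graph e, cop_win e & has_rcv e v].

Definition zero_realizable (v : seq nat) : Prop :=
  exists (T : finType) (e : rel T), [/\ is_graph e, type0 e & has_rcv e v].

Definition path_graph (n : nat) : rel 'I_n :=
  fun i j => (i <= j.+1) && (j <= i.+1).

Arguments path_graph : clear implicits.

Definition graph_iso (T1 T2 : finType) (e1 : rel T1) (e2 : rel T2) : Prop :=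
  exists f : T1 -> T2, bijective f /\ forall x y, e2 (f x) (f y) = e1 x y.

(* Main.v *)
Require Import Defs.
From mathcomp Require Import all_boot all_order.
From mathcomp Require Import zify.
Set Implicit Arguments. Unset Strict Implicit. Unset Printing Implicit Defensive.

Section Main.
Variables (T : finType) (e : rel T).
Hypothesis eR : reflexive e.
Hypothesis esym : symmetric e.

Definition fS (S : {set T}) := S :\: corners e S.
Definition G (S : {set T}) k := iter k.-1 fS S.
Definition stopsS S k := is_clique e (G S k) || (corners e (G S k) == set0).
Definition cr S a := [/\ 0 < a, is_clique e (G S a) & forall k, 0 < k < a -> ~~ stopsS S k].
Definition X S a k := if k < a then G S k :\: G S k.+1 else G S a.
Definition rcvS S a := [seq #|X S a k| | k <- rev (iota 1 a)].

Definition is_path (S : {set T}) m (p : nat -> T) :=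
  [/\ forall i, i < m -> p i \in S,
      forall x, x \in S -> exists2 i, i < m & x = p i,
      forall i j, i < m -> j < m -> p i = p j -> i = j &
      forall i j, i < m -> j < m -> e (p i) (p j) = (i <= j.+1) && (j <= i.+1)].

Lemma cornersS S : corners e S \subset S.
Proof. by apply/subsetP => x; rewrite inE => /andP[]. Qed.

Lemma fS_sub S : fS S \subset S.
Proof. exact: subsetDl. Qed.

Lemma cliqueP S : is_clique e S -> forall u v, u \in S -> v \in S -> e u v.
Proof.
move=> /forallP H u v Hu Hv; move: (H u); rewrite Hu /= => /forallP /(_ v).
by rewrite Hv.
Qed.

Lemma is_path_ext S m p q : (forall i, i < m -> p i = q i) -> is_path S m p -> is_path S m q.
Proof.
move=> Hpq [H1 H2 H3 H4]; split.
- by move=> i Hi; rewrite -Hpq // H1.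
- by move=> x /H2 [i Hi ->]; exists i => //; rewrite Hpq.
- by move=> i j Hi Hj; rewrite -!Hpq //; apply: H3.
- by move=> i j Hi Hj; rewrite -!Hpq //; apply: H4.
Qed.

Lemma path_rev S m p : is_path S m p -> is_path S m (fun i => p (m.-1 - i)).
Proof.
case=> H1 H2 H3 H4; split.
- move=> i Hi; apply: H1; lia.
- move=> x /H2 [i Hi ->]; exists (m.-1 - i); first lia.
  congr p; lia.
- move=> i j Hi Hj E; have := H3 (m.-1 - i) (m.-1 - j) ltac:(lia) ltac:(lia) E; lia.
- move=> i j Hi Hj; rewrite H4; lia.
Qed.

Lemma path_card S m p : is_path S m p -> #|S| = m.
Proof.
case=> H1 H2 H3 H4.
have -> : S = [set p (nat_of_ord i) | i in 'I_m].
  apply/setP => x; apply/idP/imsetP => [/H2 [i Hi ->]| [i _ ->]].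
  - by exists (Ordinal Hi).
  - exact: H1.
rewrite card_imset ?card_ord // => i j E; apply: val_inj.
exact: H3 (ltn_ord i) (ltn_ord j) E.
Qed.

Lemma path_clique S m p : is_path S m p -> m <= 2 -> is_clique e S.
Proof.
case=> _ H2 _ H4 Hm; apply/forallP => u; apply/implyP => /H2 [i Hi ->].
apply/forallP => v; apply/implyP => /H2 [j Hj ->]; rewrite H4 //; lia.
Qed.

Lemma path_notclique S m p : is_path S m p -> 2 < m -> ~~ is_clique e S.
Proof.
case=> H1 _ _ H4 Hm; apply/negP => /cliqueP H.
have := H (p 0) (p 2) (H1 0 ltac:(lia)) (H1 2 ltac:(lia)); rewrite H4; lia.
Qed.

Lemma path_corners S m p : is_path S m p -> 2 < m -> forall i, i < m ->
  (p i \in corners e S) = (i == 0) || (i == m.-1).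
Proof.
move=> Hp Hm.
have end0 : forall q, is_path S m q -> q 0 \in corners e S.
  move=> q [Q1 Q2 Q3 Q4].
  rewrite inE /strict_corner Q1 /=; last lia.
  apply/existsP; exists (q 1); rewrite Q1 /=; last lia.
  apply/andP; split.
    apply/eqP => E; have := Q3 1 0 ltac:(lia) ltac:(lia) E; lia.
  apply/properP; split.
    apply/subsetP => y; rewrite !inE => /andP[Hy]; case/Q2: Hy => j Hj ->.
    rewrite (Q1 j Hj) /= !Q4; lia.
  exists (q 2); rewrite !inE Q1 ?Q4 /=; lia.
have [H1 H2 H3 H4] := Hp.
move=> i Hi; case: (boolP ((i == 0) || (i == m.-1))) => Hi'.
  case/orP: Hi' => /eqP ->; first exact: end0.
  have := end0 _ (path_rev Hp); by rewrite subn0.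
apply/negbTE; rewrite inE /strict_corner.
apply/negP => /andP[_ /andP[_ /existsP[w /andP[Hw /andP[Hne /properP[Hsub _]]]]]].
case/H2: Hw => j Hj Ew; subst w.
have A : p i.-1 \in nbhd e S (p j).
  by apply: (subsetP Hsub); rewrite inE H1 ?H4 /=; lia.
have B : p i.+1 \in nbhd e S (p j).
  by apply: (subsetP Hsub); rewrite inE H1 ?H4 /=; lia.
move: A B; rewrite !inE => /andP[_ A] /andP[_ B].
rewrite H4 in A; try lia. rewrite H4 in B; try lia.
have Eij : j = i by lia.
by rewrite Eij eqxx in Hne.
Qed.


Lemma path_fS S m p : is_path S m p -> 2 < m -> is_path (fS S) (m - 2) (fun i => p i.+1).
Proof.
move=> Hp Hm; have [H1 H2 H3 H4] := Hp; split.
- move=> i Hi; rewrite in_setD (path_corners Hp) ?H1 //=; lia.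
- move=> y; rewrite in_setD => /andP[Hy /H2 [j Hj Ej]]; subst y.
  rewrite (path_corners Hp) // in Hy.
  exists j.-1; first lia. congr p; lia.
- move=> i j Hi Hj E; have := H3 i.+1 j.+1 ltac:(lia) ltac:(lia) E; lia.
- move=> i j Hi Hj; rewrite H4; lia.
Qed.

Lemma G_path S m p : is_path S m p -> forall k, k.*2 < m ->
  is_path (G S k.+1) (m - k.*2) (fun i => p (i + k)).
Proof.
move=> Hp; elim=> [|k IH] Hk.
  by rewrite double0 subn0; apply: is_path_ext Hp => i _; rewrite addn0.
have := path_fS (IH ltac:(lia)) ltac:(lia).
have -> : m - k.*2 - 2 = m - k.+1.*2 by lia.
move=> H; apply: is_path_ext H => i _; congr p; lia.
Qed.

Lemma G_path' S m p k : is_path S m p -> 0 < k -> (k.-1).*2 < m ->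
  is_path (G S k) (m - (k.-1).*2) (fun i => p (i + k.-1)).
Proof. by case: k => // k Hp _; apply: G_path. Qed.

Lemma path_corners_card S m p : is_path S m p -> 2 < m -> #|corners e S| = 2.
Proof.
move=> Hp Hm; have [H1 H2 H3 H4] := Hp.
have -> : corners e S = [set p 0; p m.-1].
  apply/setP => x; rewrite in_set2; apply/idP/idP.
    move=> Hx; have := subsetP (cornersS S) x Hx.
    case/H2 => i Hi Ex; subst x; rewrite (path_corners Hp) // in Hx.
    case/orP: Hx => /eqP ->; by rewrite eqxx ?orbT.
  case/orP => /eqP ->; rewrite (path_corners Hp) //; lia.
rewrite cards2; case: eqP => // E; have := H3 0 m.-1 ltac:(lia) ltac:(lia) E; lia.
Qed.

Lemma setDD_corners A : A :\: fS A = corners e A.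
Proof. by rewrite /fS setDDr setDv set0U; apply/setIidPr; exact: cornersS. Qed.

Lemma GS_succ S k : 0 < k -> G S k.+1 = fS (G S k).
Proof. by case: k. Qed.

Lemma X_lt S a k : 0 < k < a -> X S a k = corners e (G S k).
Proof. by case/andP=> Hk Hka; rewrite /X Hka GS_succ // setDD_corners. Qed.

Lemma X_top S a : X S a a = G S a.
Proof. by rewrite /X ltnn. Qed.

Lemma cr_uniq S a b : cr S a -> cr S b -> a = b.
Proof.
case=> Ha Hca Hka [Hb Hcb Hkb]; case: (ltngtP a b) => // H.
  by have := Hkb a; rewrite Ha H /stopsS Hca => /(_ isT).
by have := Hka b; rewrite Hb H /stopsS Hcb => /(_ isT).
Qed.

Lemma path_rank S m p a : is_path S m p -> 0 < a -> a.*2.-1 <= m <= a.*2 ->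
  [/\ cr S a, forall k, 0 < k < a -> #|X S a k| = 2 & #|X S a a| = m - (a.-1).*2].
Proof.
move=> Hp Ha Hm; split.
- split => //.
    apply: path_clique (G_path' Hp Ha ltac:(lia)) _; lia.
  move=> k /andP[Hk Hka]; have Hq := G_path' Hp Hk ltac:(lia).
  rewrite /stopsS negb_or (path_notclique Hq) /=; last lia.
  apply/set0Pn; exists (p (0 + k.-1)); rewrite (path_corners Hq) //; lia.
- move=> k /andP[Hk Hka]; rewrite X_lt ?Hk //.
  apply: path_corners_card (G_path' Hp Hk ltac:(lia)) _; lia.
- by rewrite X_top (path_card (G_path' Hp Ha ltac:(lia))).
Qed.

Lemma G_shift S k : G S k.+2 = G (fS S) k.+1.
Proof. by rewrite /G -iterSr. Qed.

Lemma cr_shift S a : cr S a.+2 -> cr (fS S) a.+1 /\ ~~ stopsS S 1.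
Proof.
case=> _ Hc Hk; split; last exact: Hk.
split => //; first by rewrite -G_shift.
case=> [|k] // /andP[_ Hka]; rewrite /stopsS -G_shift; exact: Hk.
Qed.

Lemma X_shift S a k : X S a.+2 k.+2 = X (fS S) a.+1 k.+1.
Proof. by rewrite /X !ltnS -!G_shift. Qed.

Lemma X_one S a : 0 < a -> X S a.+1 1 = corners e S.
Proof. by move=> Ha; rewrite X_lt //; lia. Qed.


Lemma nbhd_sub S u v y : nbhd e S u \subset nbhd e S v -> y \in S -> e u y -> e v y.
Proof.
move=> Hs Hy Huy; move: (subsetP Hs y); rewrite !inE Hy Huy /= => /(_ isT).
by rewrite ?Hy.
Qed.

Lemma dom_out S c : c \in corners e S ->
  exists2 w, w \in fS S & nbhd e S c \subset nbhd e S w.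
Proof.
move=> Hc; have HcS := subsetP (cornersS S) c Hc.
pose P w := (w \in S) && (nbhd e S c \subset nbhd e S w).
have Pc : P c by rewrite /P HcS subxx.
case: (arg_maxnP (fun w => #|nbhd e S w|) Pc) => w /andP[HwS Hsub] Hmax.
exists w => //; rewrite in_setD HwS andbT; apply/negP.
rewrite inE HwS /= /strict_corner HwS /=.
case/existsP => w' /andP[Hw'S /andP[_ Hpr]].
have := Hmax w'; rewrite /P Hw'S (subset_trans Hsub (proper_sub Hpr)) => /(_ isT).
have := proper_card Hpr; lia.
Qed.

Lemma end_nbr S m q x : is_path (fS S) m q -> 1 < m -> x \in corners e S ->
  e x (q 0) -> ~~ e x (q 1) ->
  nbhd e S x \subset nbhd e S (q 0) /\ (forall y, y \in fS S -> e x y -> y = q 0).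
Proof.
case=> Q1 Q2 Q3 Q4 Hm Hx Hx0 Hx1.
have HxS := subsetP (cornersS S) x Hx.
have Q0S : q 0 \in S := subsetP (fS_sub S) _ (Q1 0 ltac:(lia)).
case: (dom_out Hx) => w Hw Hsub.
case/Q2: Hw => i Hi Ew; subst w.
have Hwx : e (q i) x.
  exact: nbhd_sub Hsub HxS (eR x).
have Hw0 : e (q i) (q 0).
  exact: nbhd_sub Hsub Q0S Hx0.
rewrite Q4 in Hw0; try lia.
have Ei : i = 0.
  case: i Hi Hwx Hw0 Hsub => [|[|i]] //= Hi Hwx Hw0 Hsub.
  by rewrite esym Hwx in Hx1.
subst i; split => // y Hy Hxy; case/Q2: (Hy) => j Hj Ey; subst y.
have : e (q 0) (q j).
  exact: nbhd_sub Hsub (subsetP (fS_sub S) _ Hy) Hxy.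
rewrite Q4; try lia.
case: j Hj Hxy Hy => [|[|j]] //= Hj Hxy Hy.
by rewrite Hxy in Hx1.
Qed.

Definition pext (x : T) (q : nat -> T) m (z : T) i :=
  if i == 0 then x else if i <= m then q i.-1 else z.

Lemma extend (S H : {set T}) m q x z : is_path H m q -> 0 < m ->
  (forall y, (y \in S) = [|| y \in H, y == x | y == z]) -> x \notin H -> z \notin H ->
  x != z -> e x (q 0) -> e z (q m.-1) ->
  (forall y, y \in H -> e x y -> y = q 0) -> (forall y, y \in H -> e z y -> y = q m.-1) ->
  ~~ e x z -> is_path S m.+2 (pext x q m z).
Proof.
case=> Q1 Q2 Q3 Q4 Hm HS HxH HzH Hxz Hx0 Hzm Hxn Hzn Hnxz.
have ex : forall k, k < m -> e x (q k) = (k == 0).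
  move=> k Hk; apply/idP/eqP => [/(Hxn _ (Q1 k Hk)) E| ->//].
  exact: Q3 k 0 Hk Hm E.
have ez : forall k, k < m -> e z (q k) = (k == m.-1).
  move=> k Hk; apply/idP/eqP => [/(Hzn _ (Q1 k Hk)) E| ->//].
  exact: Q3 k m.-1 Hk ltac:(lia) E.
have qx : forall k, k < m -> (q k == x) = false.
  by move=> k Hk; apply/negbTE/eqP => E; move: HxH; rewrite -E Q1.
have qz : forall k, k < m -> (q k == z) = false.
  by move=> k Hk; apply/negbTE/eqP => E; move: HzH; rewrite -E Q1.
have cls : forall i, i < m.+2 -> [\/ i = 0 /\ pext x q m z i = x,
    0 < i <= m /\ pext x q m z i = q i.-1 | i = m.+1 /\ pext x q m z i = z].
  move=> i Hi; rewrite /pext; case: (i =P 0) => [->|Hi0]; first by constructor 1.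
  case: ifP => Him; [constructor 2; split => //; lia | constructor 3; split => //; lia].
have ezx : e z x = false by rewrite esym; apply/negbTE.
have exz : e x z = false by apply/negbTE.
split.
- move=> i Hi; rewrite HS; case: (cls i Hi) => [[_ ->]|[Hi' ->]|[_ ->]].
  + by rewrite eqxx orbT.
  + by rewrite Q1 //; lia.
  + by rewrite eqxx !orbT.
- move=> y; rewrite HS => /or3P [/Q2 [k Hk ->] | /eqP -> | /eqP ->].
  + exists k.+1; first lia. by rewrite /pext /= Hk.
  + by exists 0.
  + by exists m.+1 => //; rewrite /pext /= ltnn.
- move=> i j Hi Hj; case: (cls i Hi) => [[-> ->]|[Hi' ->]|[-> ->]];
    case: (cls j Hj) => [[-> ->]|[Hj' ->]|[-> ->]] //.
  + by move=> E; move: (qx j.-1 ltac:(lia)); rewrite E eqxx.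
  + by move/eqP; rewrite (negbTE Hxz).
  + by move=> E; move: (qx i.-1 ltac:(lia)); rewrite E eqxx.
  + move=> E; have := Q3 i.-1 j.-1 ltac:(lia) ltac:(lia) E; lia.
  + by move=> E; move: (qz i.-1 ltac:(lia)); rewrite E eqxx.
  + by move/eqP; rewrite eq_sym (negbTE Hxz).
  + by move=> E; move: (qz j.-1 ltac:(lia)); rewrite -E eqxx.
- move=> i j Hi Hj; case: (cls i Hi) => [[-> ->]|[Hi' ->]|[-> ->]];
    case: (cls j Hj) => [[-> ->]|[Hj' ->]|[-> ->]].
  + by rewrite eR.
  + rewrite ex; lia.
  + rewrite exz; lia.
  + rewrite esym ex; lia.
  + rewrite Q4; lia.
  + rewrite esym ez; lia.
  + rewrite ezx; lia.
  + rewrite ez; lia.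
  + by rewrite eR; lia.
Qed.


Lemma step S m q : is_path (fS S) m q -> 0 < m -> #|corners e S| <= 2 -> ~~ is_clique e S ->
  (m = 2 -> forall v, v \in fS S -> exists2 u, u \in S & ~~ e v u) ->
  #|corners e S| = 2 /\ exists p, is_path S m.+2 p.
Proof.
move=> Hq Hm Hc2 Hncl Hnd; have [Q1 Q2 Q3 Q4] := Hq.
have HS : forall y, (y \in S) = (y \in fS S) || (y \in corners e S).
  move=> y; rewrite in_setD; case: (boolP (y \in corners e S)) => Hy /=.
    by rewrite (subsetP (cornersS S) y Hy) ?orbT.
  by rewrite ?orbF.
have Cn : forall y, y \in corners e S -> y \notin fS S.
  by move=> y Hy; rewrite in_setD Hy.
have fin : forall x z, x \in corners e S -> z \in corners e S -> x != z ->
    corners e S = [set x; z].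
  move=> x z Hx Hz Hxz; apply/eqP; rewrite eq_sym eqEcard cards2 Hxz Hc2 andbT.
  by apply/subsetP => y; rewrite in_set2 => /orP[/eqP->|/eqP->].
have HS2 : forall x z, corners e S = [set x; z] ->
    forall y, (y \in S) = [|| y \in fS S, y == x | y == z].
  by move=> x z E y; rewrite HS E !inE.
have domq : forall c, c \in corners e S ->
    exists2 i, i < m & nbhd e S c \subset nbhd e S (q i) /\ e c (q i).
  move=> c Hc; case: (dom_out Hc) => w /Q2 [i Hi ->] Hsub; exists i => //; split => //.
  rewrite esym; exact: nbhd_sub Hsub (subsetP (cornersS S) c Hc) (eR c).
have q0S : q 0 \in S := subsetP (fS_sub S) _ (Q1 0 Hm).
case: (ltngtP m 1) => Hm1.
- lia.
- have getx : forall q', is_path (fS S) m q' ->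
      exists x, [/\ x \in corners e S, e x (q' 0) & ~~ e x (q' 1)].
    move=> q' Hq'; have [R1 R2 R3 R4] := Hq'.
    have R0S : forall i, i < m -> q' i \in S := fun i Hi => subsetP (fS_sub S) _ (R1 i Hi).
    case: (ltngtP m 2) => Hm2; first lia.
    + have Hnc : q' 0 \notin corners e S.
        by move: (R1 0 ltac:(lia)); rewrite in_setD => /andP[].
      have Hsub : ~~ (nbhd e S (q' 0) \subset nbhd e S (q' 1)).
        apply/negP => Hs; move: Hnc; rewrite inE R0S /=; last lia.
        rewrite /strict_corner R0S /=; last lia.
        apply/negP; rewrite negbK; apply/existsP; exists (q' 1); rewrite R0S /=; last lia.
        apply/andP; split.
          apply/eqP => E; have := R3 1 0 ltac:(lia) ltac:(lia) E; lia.
        apply/properP; split => //; exists (q' 2); rewrite !inE R0S /= ?R4; lia.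
      case/subsetPn: Hsub => y; rewrite !inE => /andP[HyS Hey] Hny.
      rewrite HyS /= in Hny.
      have HyC : y \in corners e S.
        move: HyS; rewrite HS => /orP[/R2 [j Hj Ey]|//]; subst y.
        rewrite R4 in Hey; try lia. rewrite R4 in Hny; lia.
      by exists y; split => //; rewrite esym.
    + case: (Hnd Hm2 (q' 1) (R1 1 ltac:(lia))) => u HuS Hu.
      have HuC : u \in corners e S.
        move: HuS; rewrite HS => /orP[/R2 [j Hj Ej]|//]; subst u.
        rewrite R4 in Hu; lia.
      exists u; split => //; last by rewrite esym.
      case: (dom_out HuC) => w /R2 [i Hi ->] Hsub.
      have := nbhd_sub Hsub (subsetP (cornersS S) u HuC) (eR u).
      case: i Hi Hsub => [|[|i]] // Hi Hsub; first by rewrite esym.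
      by move=> H; rewrite H in Hu.
      lia.
  have Hqr := path_rev Hq.
  case: (getx q Hq) => x [HxC Hx0 Hx1].
  case: (getx _ Hqr) => z [HzC Hz0 Hz1].
  have [Hxs Hxn] := end_nbr Hq Hm1 HxC Hx0 Hx1.
  have [Hzs Hzn] := end_nbr Hqr Hm1 HzC Hz0 Hz1.
  rewrite /= subn0 in Hz0 Hzn.
  have q0m : q 0 = q m.-1 -> False.
    by move=> E; have := Q3 0 m.-1 ltac:(lia) ltac:(lia) E; lia.
  have Hxz : x != z.
    apply/eqP => E; subst z; apply: q0m; symmetry; exact: Hxn _ (Q1 m.-1 ltac:(lia)) Hz0.
  have Hnxz : ~~ e x z.
    apply/negP => Exz.
    have H : e (q 0) z := nbhd_sub Hxs (subsetP (cornersS S) z HzC) Exz.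
    rewrite esym in H; apply: q0m; exact: Hzn _ (Q1 0 Hm) H.
  have EC := fin x z HxC HzC Hxz; split; first by rewrite EC cards2 Hxz.
  exists (pext x q m z).
  exact: extend Hq Hm (HS2 _ _ EC) (Cn _ HxC) (Cn _ HzC) Hxz Hx0 Hz0 Hxn Hzn Hnxz.
- subst m.
  have adj : forall c, c \in corners e S -> e c (q 0).
    by move=> c Hc; case: (domq c Hc) => i Hi [_ H]; have Ei : i = 0 := ltac:(lia); subst i.
  have q0all : forall y, y \in S -> e (q 0) y.
    move=> y; rewrite HS => /orP[/Q2 [i Hi ->]|/adj]; last by rewrite esym.
    by have -> : i = 0 by lia.
  move: Hncl; rewrite /is_clique; case/forallPn => u; rewrite negb_imply.
  case/andP => HuS /forallPn [v]; rewrite negb_imply => /andP[HvS Huv].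
  have HuC : u \in corners e S.
    move: HuS; rewrite HS => /orP[/Q2 [i Hi Eu]|//].
    have Ei : i = 0 by lia.
    by subst; rewrite q0all in Huv.
  have HvC : v \in corners e S.
    move: HvS; rewrite HS => /orP[/Q2 [i Hi Eu]|//].
    have Ei : i = 0 by lia.
    by subst; rewrite adj in Huv.
  have Huv' : u != v by apply/eqP => E; subst; rewrite eR in Huv.
  have EC := fin u v HuC HvC Huv'; split; first by rewrite EC cards2 Huv'.
  exists (pext u q 1 v).
  apply: extend Hq _ (HS2 _ _ EC) (Cn _ HuC) (Cn _ HvC) Huv' (adj u HuC) (adj v HvC) _ _ Huv => //.
    by move=> y /Q2 [i Hi ->] _; have Ei : i = 0 := ltac:(lia); subst.
  by move=> y /Q2 [i Hi ->] _; have Ei : i = 0 := ltac:(lia); subst.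
Qed.


Lemma small_path S : is_clique e S -> 0 < #|S| <= 2 -> exists p, is_path S #|S| p.
Proof.
move=> Hcl Hs; have Hcl' := cliqueP Hcl.
case: (#|S| =P 1) => [H1|H1].
  have /cards1P [x Ex] : #|S| == 1 by apply/eqP.
  rewrite H1; exists (fun _ => x); split.
  - by move=> i _; rewrite Ex inE.
  - by move=> y; rewrite Ex inE => /eqP ->; exists 0.
  - move=> i j Hi Hj _; lia.
  - move=> i j Hi Hj; rewrite eR; lia.
have H2 : #|S| = 2 by lia.
have /cards2P [x [y [Hxy Ex]]] : #|S| == 2 by apply/eqP.
have xS : x \in S by rewrite Ex !inE eqxx.
have yS : y \in S by rewrite Ex !inE eqxx orbT.
rewrite H2; exists (fun i => if i == 0 then x else y); split.
- by move=> i _; case: (i == 0).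
- by move=> z; rewrite Ex !inE => /orP[/eqP ->|/eqP ->]; [exists 0 | exists 1].
- move=> [|[|i]] [|[|j]] //= Hi Hj; try lia.
  + by move=> E; rewrite E eqxx in Hxy.
  + by move=> E; rewrite E eqxx in Hxy.
- move=> [|[|i]] [|[|j]] //= Hi Hj; try lia; rewrite ?eR //.
  + exact: Hcl'.
  + exact: Hcl'.
Qed.

Lemma uniq_path a : forall S, 0 < a -> cr S a -> 0 < #|X S a a| <= 2 ->
  (forall k, 0 < k < a -> #|X S a k| = 2) ->
  (#|X S a a| = 2 -> 1 < a -> forall v, v \in X S a a ->
     exists2 u, u \in G S a.-1 & ~~ e v u) ->
  exists p, is_path S (a.*2.-2 + #|X S a a|) p.
Proof.
elim: a => [//|[|a] IH] S _ Hcr Hc Hk Hnd.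
  rewrite X_top in Hc *; case: Hcr => _ Hcl _; exact: small_path.
have [Hcr' Hns] := cr_shift Hcr.
have Hc' : 0 < #|X (fS S) a.+1 a.+1| <= 2 by rewrite -X_shift.
have Hk' : forall k, 0 < k < a.+1 -> #|X (fS S) a.+1 k| = 2.
  by case=> [|k] // Hka; rewrite -X_shift; apply: Hk; lia.
have Hnd' : #|X (fS S) a.+1 a.+1| = 2 -> 1 < a.+1 -> forall v, v \in X (fS S) a.+1 a.+1 ->
     exists2 u, u \in G (fS S) a.+1.-1 & ~~ e v u.
  rewrite -X_shift => H2 Ha v Hv; case: (Hnd H2 isT v Hv) => u Hu Huv; exists u => //.
  move: Hu; case: (a) Ha => [//|a'] _ /=; by rewrite G_shift.
have [q Hq] := IH (fS S) isT Hcr' Hc' Hk' Hnd'.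
have Hkc : #|corners e S| = 2 by rewrite -(@X_one S a.+1) //; apply: Hk.
have Hnd2 : (a.+1).*2.-2 + #|X (fS S) a.+1 a.+1| = 2 ->
    forall v, v \in fS S -> exists2 u, u \in S & ~~ e v u.
  move=> Hm2 v Hv; have Ha0 : a = 0 by lia. subst a.
  have Hc2 : #|X S 2 2| = 2 by rewrite X_shift; lia.
  case: (Hnd Hc2 isT v _) => [|u Hu Huv]; [by rewrite X_top | by exists u].
have Hncl : ~~ is_clique e S by move: Hns; rewrite /stopsS negb_or => /andP[].
have [_ [p Hp]] := step Hq ltac:(lia) ltac:(lia) Hncl Hnd2.
exists p; have -> : (a.+2).*2.-2 + #|X S a.+2 a.+2| = ((a.+1).*2.-2 + #|X (fS S) a.+1 a.+1|).+2.
  by rewrite -X_shift; lia.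
exact: Hp.
Qed.

Lemma rcv_nth S a v : rcvS S a = v ->
  size v = a /\ forall k, 0 < k <= a -> #|X S a k| = nth 0 v (a - k).
Proof.
move<-; split; first by rewrite size_map size_rev size_iota.
move=> k Hk; rewrite (nth_map 0); last by rewrite size_rev size_iota; lia.
rewrite nth_rev ?size_iota; last lia.
rewrite nth_iota; last lia.
congr #|X S a _|; lia.
Qed.

Lemma rcv_of S a v : size v = a ->
  (forall k, 0 < k <= a -> #|X S a k| = nth 0 v (a - k)) -> rcvS S a = v.
Proof.
move=> Hs H; apply: (@eq_from_nth _ 0); first by rewrite size_map size_rev size_iota.
rewrite size_map size_rev size_iota => i Hi.
rewrite (nth_map 0); last by rewrite size_rev size_iota.
rewrite nth_rev ?size_iota // nth_iota; last lia.
rewrite H; last lia. congr nth; lia.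
Qed.

Lemma nondom_type0 a : type0 e -> cr setT a -> 1 < a -> forall v, v \in X setT a a ->
  exists2 u, u \in G setT a.-1 & ~~ e v u.
Proof.
case=> _ Hn1 Hcr Ha v Hv.
case: (boolP [forall u in G setT a.-1, e v u]) => [/forall_inP H | /forall_inPn [u Hu Huv]];
  last by exists u.
exfalso; apply: Hn1; exists a; split => //; exists v => // u Hu; exact: H.
Qed.

Lemma path_iso m p : is_path setT m p -> graph_iso e (path_graph m).
Proof.
case=> P1 P2 P3 P4.
have : forall x : T, exists i : 'I_m, p i = x.
  by move=> x; case: (P2 x (in_setT x)) => i Hi ->; exists (Ordinal Hi).
case/fin_all_exists => f Hf; exists f; split.
  exists (fun i : 'I_m => p i) => [x|i]; first exact: Hf.
  apply: val_inj; exact: P3 (ltn_ord _) (ltn_ord _) (Hf (p i)).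
by move=> x y; rewrite -{2}(Hf x) -{2}(Hf y) P4.
Qed.


Lemma part_i a : 0 < a -> has_rcv e (1 :: nseq a.-1 2) -> exists p, is_path setT (a.*2.-1) p.
Proof.
move=> Ha [a' [Hcr0 Hr0]].
have Hcr : cr setT a' := Hcr0.
have Hr : rcvS setT a' = 1 :: nseq a.-1 2 := Hr0.
case: (rcv_nth Hr) => /= Hsz Hn; rewrite size_nseq in Hsz.
have Ea : a' = a by lia. clear Hsz; subst a'.
have Htop : #|X setT a a| = 1 by rewrite Hn ?subnn //; lia.
have Hk : forall k, 0 < k < a -> #|X setT a k| = 2.
  move=> k Hk; rewrite Hn; last lia.
  have -> : a - k = (a - k).-1.+1 by lia.
  rewrite /= nth_nseq; case: ltnP => //; lia.
have [p Hp] := uniq_path Ha Hcr ltac:(by rewrite Htop) Hk ltac:(by rewrite Htop).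
rewrite Htop in Hp; exists p; have -> : a.*2.-1 = a.*2.-2 + 1 by lia.
exact: Hp.
Qed.

Lemma part_iii a : 0 < a -> type0 e -> has_rcv e (nseq a 2) -> exists p, is_path setT a.*2 p.
Proof.
move=> Ha Ht0 [a' [Hcr0 Hr0]].
have Hcr : cr setT a' := Hcr0.
have Hr : rcvS setT a' = nseq a 2 := Hr0.
case: (rcv_nth Hr) => /= Hsz Hn; rewrite size_nseq in Hsz.
have Ea : a' = a by lia. clear Hsz; subst a'.
have Htop : #|X setT a a| = 2 by rewrite Hn ?subnn ?nth_nseq ?Ha //; lia.
have Hk : forall k, 0 < k < a -> #|X setT a k| = 2.
  move=> k Hk; rewrite Hn ?nth_nseq; last lia.
  case: ltnP => //; lia.
have Hnd := nondom_type0 Ht0 Hcr.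
have [p Hp] := uniq_path Ha Hcr ltac:(by rewrite Htop) Hk (fun _ => Hnd).
rewrite Htop in Hp; exists p; have -> : a.*2 = a.*2.-2 + 2 by lia.
exact: Hp.
Qed.

Lemma part_ii b : 0 < b -> ~ has_rcv e (1 :: rcons (nseq b 2) 1).
Proof.
move=> Hb [a' [Hcr0 Hr0]].
have Hcr : cr setT a' := Hcr0.
have Hr : rcvS setT a' = 1 :: rcons (nseq b 2) 1 := Hr0.
case: (rcv_nth Hr) => /= Hsz Hn; rewrite size_rcons size_nseq in Hsz.
subst a'.
have nv : forall j, nth 0 (1 :: rcons (nseq b 2) 1) j =
    if j == 0 then 1 else if j <= b then 2 else if j == b.+1 then 1 else 0.
  by case=> [|j] //=; rewrite nth_rcons size_nseq nth_nseq eqSS; case: ifP => // ->.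
have [Hcr' Hns] := cr_shift Hcr.
have Htop : #|X (fS setT) b.+1 b.+1| = 1 by rewrite -X_shift Hn ?subnn //; lia.
have Hk : forall k, 0 < k < b.+1 -> #|X (fS setT) b.+1 k| = 2.
  case=> [|k] // Hk; rewrite -X_shift Hn ?nv; last lia.
  case: eqP => H1; first lia. case: ifP => H2 //; lia.
have [q Hq] := uniq_path (a:=b.+1) isT Hcr' ltac:(by rewrite Htop) Hk ltac:(by rewrite Htop).
rewrite Htop in Hq.
have HC : #|corners e setT| = 1.
  rewrite -(@X_one setT b.+1) // Hn ?nv; last lia.
  case: eqP => H1; first lia. case: ifP => H2; first lia. rewrite ifT //; lia.
have Hncl : ~~ is_clique e setT by move: Hns; rewrite /stopsS negb_or => /andP[].
have [HC2 _] := step Hq ltac:(lia) ltac:(lia) Hncl ltac:(move=> H; lia).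
by rewrite HC in HC2.
Qed.

Lemma part_iv b : type0 e -> ~ has_rcv e (rcons (nseq b.+1 2) 1).
Proof.
move=> Ht0 [a' [Hcr0 Hr0]].
have Hcr : cr setT a' := Hcr0.
have Hr : rcvS setT a' = rcons (nseq b.+1 2) 1 := Hr0.
case: (rcv_nth Hr) => /= Hsz Hn; rewrite size_rcons size_nseq in Hsz.
subst a'.
have nv : forall j, nth 0 (rcons (nseq b.+1 2) 1) j =
    if j < b.+1 then 2 else if j == b.+1 then 1 else 0.
  by move=> j; rewrite nth_rcons size_nseq nth_nseq; case: ifP => // ->.
have [Hcr' Hns] := cr_shift Hcr.
have Hnd0 := nondom_type0 Ht0 Hcr.
have Htop : #|X (fS setT) b.+1 b.+1| = 2 by rewrite -X_shift Hn ?subnn //; lia.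
have Hk : forall k, 0 < k < b.+1 -> #|X (fS setT) b.+1 k| = 2.
  case=> [|k] // Hk; rewrite -X_shift Hn ?nv; last lia.
  case: ifP => H2 //; lia.
have Hnd' : #|X (fS setT) b.+1 b.+1| = 2 -> 1 < b.+1 -> forall v, v \in X (fS setT) b.+1 b.+1 ->
     exists2 u, u \in G (fS setT) b.+1.-1 & ~~ e v u.
  rewrite -X_shift => H2 Hb v Hv; case: (Hnd0 isT v Hv) => u Hu Huv; exists u => //.
  move: Hu; case: (b) Hb => [//|b'] _ /=; by rewrite G_shift.
have [q Hq] := uniq_path (a:=b.+1) isT Hcr' ltac:(by rewrite Htop) Hk Hnd'.
rewrite Htop in Hq.
have HC : #|corners e setT| = 1.
  rewrite -(@X_one setT b.+1) // Hn ?nv; last lia.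
  case: ifP => H2; first lia. rewrite ifT //; lia.
have Hncl : ~~ is_clique e setT by move: Hns; rewrite /stopsS negb_or => /andP[].
have Hnd2 : (b.+1).*2.-2 + 2 = 2 -> forall v, v \in fS setT -> exists2 u, u \in setT & ~~ e v u.
  move=> Hm2 v Hv; have Hb0 : b = 0 by lia. subst b.
  have Hv' : v \in X setT 2 2 by rewrite X_top.
  by case: (Hnd0 isT v Hv') => u Hu Huv; exists u.
have [HC2 _] := step Hq ltac:(lia) ltac:(lia) Hncl Hnd2.
by rewrite HC in HC2.
Qed.

Lemma exist_odd a p : 0 < a -> is_path setT a.*2.-1 p ->
  cop_win e /\ has_rcv e (1 :: nseq a.-1 2).
Proof.
move=> Ha Hp; have [Hcr Hk Htop] := path_rank Hp Ha ltac:(lia).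
split; first by exists a.
exists a; split => //; change (rcvS setT a = 1 :: nseq a.-1 2).
apply: rcv_of; first by rewrite /= size_nseq; lia.
move=> k Hk'; case: (ltngtP k a) => Hka; last 1 first.
- subst k; rewrite Htop subnn /=; lia.
- rewrite Hk; last lia.
  have -> : a - k = (a - k).-1.+1 by lia.
  rewrite /= nth_nseq; case: ltnP => //; lia.
- lia.
Qed.

Lemma exist_even a p : 0 < a -> is_path setT a.*2 p ->
  type0 e /\ has_rcv e (nseq a 2).
Proof.
move=> Ha Hp; have [Hcr Hk Htop] := path_rank Hp Ha ltac:(lia).
split; last first.
  exists a; split => //; change (rcvS setT a = nseq a 2).
  apply: rcv_of; first by rewrite size_nseq.
  move=> k Hk'; rewrite nth_nseq; case: ltnP => Hl; last lia.
  case: (ltngtP k a) => Hka; [by rewrite Hk ?Hka; lia | lia |].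
  subst k; rewrite Htop; lia.
split; first by exists a.
case=> a' [Hcr0 Ha' [v Hv Hdom]].
have Hcr' : cr setT a' := Hcr0.
have Ea := cr_uniq Hcr Hcr'; subst a'.
have [P1 P2 P3 P4] := Hp.
have [G1 G2 _ _] := G_path' Hp Ha ltac:(lia).
have [H1 _ _ _] := G_path' Hp (k := a.-1) ltac:(lia) ltac:(lia).
have Hv' : v \in G setT a by move: Hv; rewrite /Xk ltnn.
case/G2: Hv' => i Hi Ev; subst v.
case: (i =P 0) => [Ei|Ei].
  subst i; have := Hdom _ (H1 3 ltac:(lia)); rewrite P4; lia.
have := Hdom _ (H1 0 ltac:(lia)); rewrite P4; lia.
Qed.

End Main.

Lemma path_graph_graph n : 0 < n -> is_graph (path_graph n).
Proof.
move=> Hn; split; first by rewrite card_ord.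
- by move=> i; rewrite /path_graph !leqnSn.
- by move=> i j; rewrite /path_graph andbC.
Qed.

Lemma path_graph_path n (x0 : 'I_n) :
  is_path (path_graph n) setT n (fun i => insubd x0 i).
Proof.
split.
- by move=> i _; rewrite in_setT.
- move=> y _; exists (val y); first exact: ltn_ord.
  by apply: val_inj; rewrite /= val_insubd ltn_ord.
- by move=> i j Hi Hj /(congr1 val); rewrite !val_insubd Hi Hj.
- by move=> i j Hi Hj; rewrite /path_graph !val_insubd Hi Hj.
Qed.

Theorem theorem3p22 (alpha : nat) (Halpha : 1 <= alpha) :
  (* (i) *)
  ([/\ is_graph (path_graph (alpha.*2.-1)), cop_win (path_graph (alpha.*2.-1)),
       has_rcv (path_graph (alpha.*2.-1)) (1 :: nseq alpha.-1 2) &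
       forall (T : finType) (e : rel T), is_graph e -> cop_win e ->
         has_rcv e (1 :: nseq alpha.-1 2) -> graph_iso e (path_graph (alpha.*2.-1))])
  /\
  (* (ii) *)
  (3 <= alpha -> ~ realizable (1 :: rcons (nseq (alpha - 2) 2) 1))
  /\
  (* (iii) *)
  ([/\ is_graph (path_graph (alpha.*2)), type0 (path_graph (alpha.*2)),
       has_rcv (path_graph (alpha.*2)) (nseq alpha 2) &
       forall (T : finType) (e : rel T), is_graph e -> type0 e ->
         has_rcv e (nseq alpha 2) -> graph_iso e (path_graph (alpha.*2))])
  /\
  (* (iv) *)
  (2 <= alpha -> ~ zero_realizable (rcons (nseq alpha.-1 2) 1)).
Proof.
split; [|split; [|split]].
- have Hn : 0 < alpha.*2.-1 by lia.
  have Hp := path_graph_path (Ordinal Hn).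
  have [Hcw Hr] := exist_odd Halpha Hp.
  split => //; first exact: path_graph_graph.
  move=> T e [_ eR esym] _ Hr'; have [p Hp'] := part_i eR esym Halpha Hr'.
  exact: path_iso Hp'.
- move=> Ha [T [e [[_ eR esym] _ Hr]]].
  exact: (part_ii eR esym (b := alpha - 2) ltac:(lia) Hr).
- have Hn : 0 < alpha.*2 by lia.
  have Hp := path_graph_path (Ordinal Hn).
  have [Ht0 Hr] := exist_even Halpha Hp.
  split => //; first exact: path_graph_graph.
  move=> T e [_ eR esym] Ht Hr'; have [p Hp'] := part_iii eR esym Halpha Ht Hr'.
  exact: path_iso Hp'.
- move=> Ha [T [e [[_ eR esym] Ht0 Hr]]].
  have E : alpha.-1 = (alpha - 2).+1 by lia.
  have Hr' : has_rcv e (rcons (nseq (alpha - 2).+1 2) 1) by rewrite -E.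
  exact: (part_iv (b := alpha - 2) eR esym Ht0 Hr').
Qed.
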